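(* Let $X=\mathbb{CP}^2\#n\overline{\mathbb{CP}}^2$ with $K_0=-3H+E_1+\cdots+E_n$, let $k$ be a positive integer and $U_5=\{A\in H_2(X;\mathbb{Z}):\mathrm{ind}(A)\ge 2k,\ A\cdot H>0\}$. (1) Every $\phi\in D_{K_0}$ satisfies $\phi(U_5)=U_5$. (2) If $n\le 8$, then for every $A\in U_5$ the orbit $\{\phi(A):\phi\in D_{K_0}\}$ is a finite subset of $U_5$.
   Context: $\{H,E_1,\dots,E_n\}$ is the standard basis of $H_2(X;\mathbb{Z})$, $\mathrm{ind}(A):=A^2-K_0\cdot A$. $D_{K_0}$ is the group of automorphisms of $H_2(X)$ induced by diffeomorphisms of $X$ preserving the canonical class $K_0$; it is generated by the reflections along the classes $E_i-E_j$ and $H-E_1-E_2-E_3$ (reflection along $v$ with $v^2=-2$ being $x\mapsto x+(x\cdot v)v$). *)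

(* Defs.v *)
From mathcomp Require Import all_boot all_order all_algebra.
Set Implicit Arguments. Unset Strict Implicit. Unset Printing Implicit Defensive.
Import Order.TTheory GRing.Theory Num.Theory.
Local Open Scope ring_scope.

(* H_2(X;Z) for X = CP^2 # n \bar{CP^2}: integer row vectors of length n+1,
   coordinate ord0 = coefficient of H, coordinate (lift ord0 i) = coefficient of E_(i+1). *)
Definition hcls (n : nat) := 'rV[int]_(n.+1).

Definition clsH (n : nat) : hcls n := \row_(j < n.+1) ((j == ord0)%:R : int).
Definition clsE (n : nat) (i : 'I_n) : hcls n :=
  \row_(j < n.+1) ((j == lift ord0 i)%:R : int).

Definition idot (n : nat) (A B : hcls n) : int :=
  A 0 ord0 * B 0 ord0 - \sum_(i < n) A 0 (lift ord0 i) * B 0 (lift ord0 i).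

Definition K0 (n : nat) : hcls n := - (3 *: clsH n) + \sum_(i < n) clsE i.

Definition ind (n : nat) (A : hcls n) : int := idot A A - idot (K0 n) A.

(* reflection along v (v^2 = -2): x |-> x + (x.v) v *)
Definition refl (n : nat) (v : hcls n) (x : hcls n) : hcls n := x + idot x v *: v.

Definition gen_class (n : nat) (v : hcls n) : Prop :=
  (exists i j : 'I_n, i != j /\ v = clsE i - clsE j) \/
  (exists i1 i2 i3 : 'I_n, val i1 = 0%N /\ val i2 = 1%N /\ val i3 = 2%N /\
      v = clsH n - clsE i1 - clsE i2 - clsE i3).

(* D_{K_0}: the group generated by these reflections (each is an involution,
   so the group is the set of finite compositions of generators) *)
Inductive DK (n : nat) : (hcls n -> hcls n) -> Prop :=
  | DK_id : DK (fun x => x)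
  | DK_step (v : hcls n) (f : hcls n -> hcls n) :
      gen_class v -> DK f -> DK (fun x => refl v (f x)).

Definition U5 (n k : nat) (A : hcls n) : Prop :=
  ((2 * k)%N%:Z <= ind A) /\ (0 < idot A (clsH n)).

(* Main.v *)
Require Import Defs.
From mathcomp Require Import all_boot all_order all_algebra.
Local Open Scope ring_scope.
From mathcomp Require Import zify ring lra.
Import Order.TTheory GRing.Theory Num.Theory.
Set Implicit Arguments.
Local Open Scope ring_scope.
Section S.
Variable n : nat.
Implicit Types x y z v : hcls n.
Lemma idotDl x y z : idot (x + y) z = idot x z + idot y z.
Proof.
rewrite /idot !mxE; under eq_bigr do rewrite !mxE mulrDl.
rewrite big_split /=; ring.
Qed.
Lemma idotZl t x z : idot (t *: x) z = t * idot x z.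
Proof.
rewrite /idot !mxE; under eq_bigr do rewrite !mxE -mulrA.
rewrite -mulr_sumr; ring.
Qed.
Lemma idotC x y : idot x y = idot y x.
Proof. by rewrite /idot mulrC; under eq_bigr do rewrite mulrC. Qed.
Lemma idotNl x z : idot (- x) z = - idot x z.
Proof. by rewrite -scaleN1r idotZl mulN1r. Qed.
Lemma idotDr x y z : idot z (x + y) = idot z x + idot z y.
Proof. by rewrite idotC idotDl !(idotC z). Qed.
Lemma idotZr t x z : idot z (t *: x) = t * idot z x.
Proof. by rewrite idotC idotZl !(idotC z). Qed.
Lemma idotNr x z : idot z (- x) = - idot z x.
Proof. by rewrite idotC idotNl !(idotC z). Qed.
Lemma idot0l z : idot 0 z = 0.
Proof. by rewrite -(scale0r (0 : hcls n)) idotZl mul0r. Qed.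
Lemma idot_sumr I (r : seq I) (P : pred I) (F : I -> hcls n) x :
  idot x (\sum_(i <- r | P i) F i) = \sum_(i <- r | P i) idot x (F i).
Proof.
rewrite idotC (big_morph (fun y => idot y x) (fun a b => idotDl a b x) (idot0l x)).
by apply: eq_bigr => i _; rewrite idotC.
Qed.
Lemma l0n (i : 'I_n) : (lift ord0 i == ord0 :> 'I_n.+1) = false.
Proof. by rewrite eq_sym (negbTE (neq_lift _ _)). Qed.
Lemma l0n' (i : 'I_n) : (ord0 == lift ord0 i :> 'I_n.+1) = false.
Proof. by rewrite eq_sym l0n. Qed.
Lemma idotH x : idot x (clsH n) = x 0 ord0.
Proof.
rewrite /idot !mxE eqxx mulr1 big1 ?subr0 // => i _.
by rewrite !mxE l0n mulr0.
Qed.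
Lemma idotE x (i : 'I_n) : idot x (clsE i) = - x 0 (lift ord0 i).
Proof.
rewrite /idot !mxE l0n' mulr0 sub0r (bigD1 i) //=.
rewrite !mxE eqxx mulr1 big1 ?addr0 // => j /negbTE hj.
by rewrite !mxE (inj_eq lift_inj) hj mulr0.
Qed.
Lemma cH0 : clsH n 0 ord0 = 1. Proof. by rewrite mxE eqxx. Qed.
Lemma cHl (i : 'I_n) : clsH n 0 (lift ord0 i) = 0. Proof. by rewrite mxE l0n. Qed.
Lemma cE0 (i : 'I_n) : clsE i 0 ord0 = 0. Proof. by rewrite mxE l0n'. Qed.
Lemma cEl (i j : 'I_n) : clsE i 0 (lift ord0 j) = (j == i)%:R. Proof. by rewrite mxE (inj_eq lift_inj). Qed.
Lemma idotK0 x : idot (K0 n) x = -3 * x 0 ord0 - \sum_(i < n) x 0 (lift ord0 i).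
Proof.
rewrite idotC /K0 idotDr idotNr idotZr idotH idot_sumr.
under eq_bigr do rewrite idotE. rewrite sumrN; ring.
Qed.
Lemma sum_delta (i : 'I_n) : \sum_(l < n) ((l == i)%:R : int) = 1.
Proof. by rewrite (bigD1 i) //= eqxx big1 ?addr0 // => j /negbTE ->. Qed.
Lemma idotK0H : idot (K0 n) (clsH n) = -3.
Proof. rewrite idotK0 cH0 big1 ?subr0 ?mulr1 // => i _; exact: cHl. Qed.
Lemma idotK0E (i : 'I_n) : idot (K0 n) (clsE i) = -1.
Proof. rewrite idotK0 cE0; under eq_bigr do rewrite cEl. by rewrite sum_delta mulr0 sub0r. Qed.
Lemma idotHH : idot (clsH n) (clsH n) = 1. Proof. by rewrite idotH cH0. Qed.
Lemma idotHE (i : 'I_n) : idot (clsH n) (clsE i) = 0. Proof. by rewrite idotE cHl oppr0. Qed.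
Lemma idotEH (i : 'I_n) : idot (clsE i) (clsH n) = 0. Proof. by rewrite idotH cE0. Qed.
Lemma idotEE (i j : 'I_n) : idot (clsE i) (clsE j) = - (j == i)%:R. Proof. by rewrite idotE cEl. Qed.
Lemma refl_dot v x y : idot v v = -2 -> idot (refl v x) (refl v y) = idot x y.
Proof.
move=> hv; rewrite /refl !(idotDl, idotDr, idotZl, idotZr) ?(idotC v x) ?(idotC v y) hv; ring.
Qed.
Lemma gen_vv v : gen_class v -> idot v v = -2 /\ idot (K0 n) v = 0.
Proof.
case=> [[i [j [hij ->]]]|[i1 [i2 [i3 [h1 [h2 [h3 ->]]]]]]].
  rewrite !(idotDl, idotDr, idotNl, idotNr, idotEE, idotK0E) eqxx (negbTE hij) eq_sym (negbTE hij).
  rewrite !eqxx /=; split; ring.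
have d12 : (i1 == i2) = false by apply/negbTE; apply/eqP => e; move: h1; rewrite e h2.
have d13 : (i1 == i3) = false by apply/negbTE; apply/eqP => e; move: h1; rewrite e h3.
have d23 : (i2 == i3) = false by apply/negbTE; apply/eqP => e; move: h2; rewrite e h3.
rewrite !(idotDl, idotDr, idotNl, idotNr, idotEE, idotK0E, idotK0H, idotHH, idotHE, idotEH) !eqxx.
rewrite ?d12 ?d13 ?d23 ?(eq_sym i2 i1) ?(eq_sym i3 i1) ?(eq_sym i3 i2) ?d12 ?d13 ?d23 /=.
split; ring.
Qed.
Lemma DK_inv phi : DK phi -> (forall x y, idot (phi x) (phi y) = idot x y) /\
   (forall x, idot (K0 n) (phi x) = idot (K0 n) x).
Proof.
elim=> [|v f hv _ [IH1 IH2]]; first by [].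
have [vv kv] := gen_vv hv.
split=> [x y|x]; first by rewrite refl_dot.
by rewrite /refl idotDr idotZr kv mulr0 addr0.
Qed.
Lemma ind_formula x : ind x = x 0 ord0 * x 0 ord0 + 3 * x 0 ord0 +
   \sum_(i < n) (x 0 (lift ord0 i) - x 0 (lift ord0 i) * x 0 (lift ord0 i)).
Proof. rewrite /ind idotK0 {1}/idot sumrB; ring. Qed.
Lemma refl_pos v A : gen_class v -> 2 <= ind A -> 0 < idot A (clsH n) ->
  0 < idot (refl v A) (clsH n).
Proof.
move=> hv; rewrite /refl idotDl idotZl.
case: hv => [[i [j [hij ->]]]|[i1 [i2 [i3 [h1 [h2 [h3 ->]]]]]]].
  by rewrite idotDl idotNl !idotEH oppr0 addr0 mulr0 addr0.
have n12 : i2 != i1 by apply/eqP => e; move: h1; rewrite -e h2.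
have n13 : i3 != i1 by apply/eqP => e; move: h1; rewrite -e h3.
have n23 : i3 != i2 by apply/eqP => e; move: h2; rewrite -e h3.
rewrite !(idotDl, idotDr, idotNl, idotNr, idotHH, idotEH, idotE) idotH ind_formula.
rewrite (bigD1 i1) //= (bigD1 i2) //= (bigD1 i3) /=; last by rewrite n13 n23.
set R := \sum_(i | _) _.
have : R <= 0.
  apply: sumr_le0 => i _; nia.
move: (A 0 ord0) (A 0 (lift ord0 i1)) (A 0 (lift ord0 i2)) (A 0 (lift ord0 i3)) => a c1 c2 c3 hR hind ha.
rewrite subr0 subr0 subr0 mulr1; rewrite ltNge; apply/negP => hn.
have s1 := sqr_ge0 (c1 - c2). have s2 := sqr_ge0 (c1 - c3). have s3 := sqr_ge0 (c2 - c3).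
have hp : 0 <= (- (c1 + c2 + c3) - 2 * a) * (- (c1 + c2 + c3) + 2 * a + 3) by apply: mulr_ge0; lia.
nia.
Qed.
Lemma refl_inv v x : idot v v = -2 -> refl v (refl v x) = x.
Proof.
move=> hv; rewrite /refl idotDl idotZl hv -addrA -scalerDl.
have -> : idot x v + (idot x v + idot x v * -2) = 0 by ring.
by rewrite scale0r addr0.
Qed.
Lemma refl_U5 k v (A : hcls n) : (0 < k)%N -> gen_class v -> U5 k A -> U5 k (refl v A).
Proof.
move=> hk hv [h1 h2]; have [vv kv] := gen_vv hv.
have hi : ind (refl v A) = ind A.
  by rewrite /ind refl_dot // /refl idotDr idotZr kv mulr0 addr0.
split; first by rewrite hi.
apply: refl_pos => //; apply: le_trans h1; rewrite lez_nat; lia.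
Qed.
Lemma DK_U5 k phi : (0 < k)%N -> DK phi -> forall A : hcls n, U5 k A -> U5 k (phi A).
Proof.
move=> hk; elim=> [//|v f hv _ IH] A hA.
exact: refl_U5 hk hv (IH A hA).
Qed.
Lemma DK_surj k phi : (0 < k)%N -> DK phi -> forall B : hcls n, U5 k B -> exists A, U5 k A /\ phi A = B.
Proof.
move=> hk; elim=> [|v f hv _ IH] B hB; first by exists B.
have [vv _] := gen_vv hv.
have [A [hA e]] := IH _ (refl_U5 hk hv hB).
by exists A; split => //; rewrite e refl_inv.
Qed.
Lemma sq_expand (a : int) (c : 'I_n -> int) :
  \sum_(i < n) ((3 * c i + a) * (3 * c i + a)) =
  9 * \sum_(i < n) (c i * c i) + 6 * a * \sum_(i < n) c i + a * a * n%:R.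
Proof.
have -> : \sum_(i < n) ((3 * c i + a) * (3 * c i + a)) =
   \sum_(i < n) (9 * (c i * c i)) + \sum_(i < n) (6 * a * c i) + \sum_(i < n) (a * a).
  by rewrite -!big_split; apply: eq_bigr => i _ /=; ring.
by rewrite -!mulr_sumr sumr_const card_ord !mulrnAr mulr1.
Qed.
Lemma orbit_bound (N M : int) : (n <= 8)%N -> exists Bd : nat, forall x : hcls n,
  idot x x = N -> idot (K0 n) x = M -> forall j, `|x 0 j| <= Bd%:Z.
Proof.
move=> hn.
exists (absz ((6 * `|M| + 9 * `|N| + 1) * (6 * `|M| + 9 * `|N| + 1) + `|N|)) => x hN hM j.
have eN : N = x 0 ord0 * x 0 ord0 - \sum_(i < n) (x 0 (lift ord0 i) * x 0 (lift ord0 i)) by rewrite -hN.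
rewrite idotK0 in hM.
have hs := sq_expand (x 0 ord0) (fun i => x 0 (lift ord0 i)).
have hs0 : 0 <= \sum_(i < n) ((3 * x 0 (lift ord0 i) + x 0 ord0) * (3 * x 0 (lift ord0 i) + x 0 ord0)).
  by apply: sumr_ge0 => i _; rewrite -expr2 sqr_ge0.
rewrite hs in hs0.
have hn' : (n%:R : int) <= 8 by lia.
move: hs0 hn' eN hM.
set Q := \sum_(i < n) _. set S := \sum_(i < n) _.
have hQ : forall i, x 0 (lift ord0 i) * x 0 (lift ord0 i) <= Q.
  move=> i; rewrite /Q (bigD1 i) //= lerDl; apply: sumr_ge0 => l _; timeout 15 nia.
move: (n%:R : int) => nn.
move=> hs0 hn' eN hM.
move: (hQ) => /(_ _) hQ'.
have hQ0 : forall i, `|x 0 (lift ord0 i)| <= Q.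
  move=> i; apply: le_trans (hQ i); clear; move: (x 0 (lift ord0 i)) => c; timeout 15 nia.
clear hQ hQ'.
set D := 6 * `|M| + 9 * `|N| + 1.
rewrite gez0_abs; last by clearbody D; timeout 15 nia.
suff [H0 H1] : `|x 0 ord0| <= D * D + `|N| /\ forall i, `|x 0 (lift ord0 i)| <= D * D + `|N|.
  by case: (unliftP ord0 j) => [i ->|->].
move: (x 0 ord0) hs0 eN hM hQ0 => a hs0 eN hM hQ0.
have h8 : 0 <= a * a * (8 - nn) by apply: mulr_ge0; [timeout 15 nia | timeout 15 lia].
have h1 : a * a + 6 * a * M + 9 * N <= 0.
  rewrite eN -hM; timeout 15 nia.
have ha : `|a| <= D by rewrite /D; clear -h1; timeout 15 nia.
have hC : 1 <= D by rewrite /D; timeout 15 lia.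
clearbody D. move: D ha hC => C ha hC.
have haa : a * a <= C * C by clear -ha hC; timeout 15 nia.
split; last first.
  move=> i; move: (hQ0 i) => h; move: (x 0 (lift ord0 i)) h => c h; clear -h eN haa hC; clearbody Q; timeout 15 nia.
clear -ha hC; timeout 15 nia.
Qed.
Lemma box (B : nat) : exists s : seq (hcls n), forall x : hcls n,
  (forall j, `|x 0 j| <= B%:Z) -> x \in s.
Proof.
exists [seq \row_j ((nat_of_ord (f j))%:Z - B%:Z) | f : {ffun 'I_n.+1 -> 'I_(B.*2.+1)} <- enum {ffun 'I_n.+1 -> 'I_(B.*2.+1)}].
move=> x hx.
have hlt : forall j : 'I_n.+1, (absz (x 0 j + B%:Z)%R < B.*2.+1)%N.
  move=> j; have := hx j; lia.
apply/mapP; exists [ffun j => Ordinal (hlt j)]; first by rewrite mem_enum.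
apply/rowP => j; rewrite !mxE ffunE /=.
have := hx j.
lia.
Qed.
End S.

Theorem lemma4p2 (n k : nat) (hk : (0 < k)%N) :
  (forall phi : hcls n -> hcls n, DK phi ->
     (forall A, U5 k A -> U5 k (phi A)) /\
     (forall B, U5 k B -> exists A, U5 k A /\ phi A = B)) /\
  ((n <= 8)%N -> forall A : hcls n, U5 k A ->
     (exists s : seq (hcls n), forall phi, DK phi -> phi A \in s) /\
     (forall phi, DK phi -> U5 k (phi A))).
Proof.
split.
  move=> phi hphi; split; [exact: DK_U5 hk hphi | exact: DK_surj hk hphi].
move=> hn A hA; split; last by move=> phi hphi; exact: DK_U5 hk hphi _ hA.
have [Bd hBd] := orbit_bound n (idot A A) (idot (K0 n) A) hn.
have [s hs] := box n Bd.
exists s => phi hphi; apply: hs; apply: hBd; have [h1 h2] := DK_inv hphi; [exact: h1 | exact: h2].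
Qed.
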